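(* There exist $\mathfrak{c}$ pairwise non-homeomorphic topologies $\tau\in\mathcal{L}$ such that $(\mathbb{R},\tau)$ is a metrizable space of first category.
   Context: $\mathfrak{c}=|\mathbb{R}|$. $\eta$ denotes the Euclidean topology on $\mathbb{R}$. $\mathcal{L}$ denotes the family of all Hausdorff topologies $\tau$ on the set $\mathbb{R}$ with $\tau\subset\eta$. *)

(* Defs.v *)
From Stdlib Require Import Reals.
Open Scope R_scope.

Definition topology_on_R := (R -> Prop) -> Prop.

Definition is_topology (tau : topology_on_R) : Prop :=
  tau (fun _ => False) /\ tau (fun _ => True) /\
  (forall U V, tau U -> tau V -> tau (fun x => U x /\ V x)) /\
  (forall F : (R -> Prop) -> Prop, (forall U, F U -> tau U) ->
      tau (fun x => exists U, F U /\ U x)).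

Definition eta : topology_on_R := fun U => open_set U.

Definition coarser (tau sigma : topology_on_R) : Prop :=
  forall U, tau U -> sigma U.

Definition hausdorff (tau : topology_on_R) : Prop :=
  forall x y, x <> y -> exists U V, tau U /\ tau V /\ U x /\ V y /\
    (forall z, ~ (U z /\ V z)).

Definition in_L (tau : topology_on_R) : Prop :=
  is_topology tau /\ hausdorff tau /\ coarser tau eta.

Definition is_metric (d : R -> R -> R) : Prop :=
  (forall x y, 0 <= d x y) /\ (forall x y, d x y = 0 <-> x = y) /\
  (forall x y, d x y = d y x) /\ (forall x y z, d x z <= d x y + d y z).

Definition metrizable (tau : topology_on_R) : Prop :=
  exists d, is_metric d /\
    forall U, tau U <-> (forall x, U x -> exists e, 0 < e /\
                           forall y, d x y < e -> U y).

Definition closure (tau : topology_on_R) (A : R -> Prop) : R -> Prop :=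
  fun x => forall U, tau U -> U x -> exists y, U y /\ A y.

Definition nowhere_dense (tau : topology_on_R) (A : R -> Prop) : Prop :=
  forall U, tau U -> (forall x, U x -> closure tau A x) -> forall x, ~ U x.

Definition first_category (tau : topology_on_R) : Prop :=
  exists A : nat -> (R -> Prop), (forall n, nowhere_dense tau (A n)) /\
    forall x, exists n, A n x.

Definition continuous_between (tau sigma : topology_on_R) (f : R -> R) : Prop :=
  forall V, sigma V -> tau (fun x => V (f x)).

Definition homeomorphic (tau sigma : topology_on_R) : Prop :=
  exists f g : R -> R, (forall x, g (f x) = x) /\ (forall y, f (g y) = y) /\
    continuous_between tau sigma f /\ continuous_between sigma tau g.

(* Main.v *)
Require Import Defs.
From Stdlib Require Import Reals Lra Lia ZArith Classical Cantor.
Open Scope R_scope.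


Lemma IZR_nz_ge1 : forall z : Z, z <> 0%Z -> 1 <= Rabs (IZR z).
Proof.
  intros z Hz. destruct (Z_lt_le_dec 0 z).
  - rewrite Rabs_right. apply IZR_le; lia. apply Rle_ge, IZR_le; lia.
  - rewrite Rabs_left. replace 1 with (- IZR (-1)) by (simpl; lra).
    apply Ropp_le_contravar, IZR_le; lia. apply IZR_lt; lia.
Qed.

Definition rnd (x : R) : Z := (up (x + /2) - 1)%Z.

Lemma rnd_spec : forall x, Rabs (x - IZR (rnd x)) <= /2.
Proof.
  intros x. destruct (archimed (x + /2)) as [H1 H2]. unfold rnd.
  rewrite minus_IZR. simpl. apply Rabs_le. lra.
Qed.

Definition D (x : R) : R := Rabs (x - IZR (rnd x)).

Lemma D_ge0 : forall x, 0 <= D x.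
Proof. intros; apply Rabs_pos. Qed.

Lemma D_half : forall x, D x <= /2.
Proof. intros; apply rnd_spec. Qed.

Lemma D_le : forall x (m : Z), D x <= Rabs (x - IZR m).
Proof.
  intros x m. unfold D. pose proof (rnd_spec x) as H.
  destruct (Z.eq_dec m (rnd x)) as [<-|Hne]. lra.
  assert (H1 : 1 <= Rabs (IZR (m - rnd x))) by (apply IZR_nz_ge1; lia).
  rewrite minus_IZR in H1.
  assert (Rabs (IZR m - IZR (rnd x)) <= Rabs (x - IZR m) + Rabs (x - IZR (rnd x))).
  { replace (IZR m - IZR (rnd x)) with (-(x - IZR m) + (x - IZR (rnd x))) by ring.
    eapply Rle_trans. apply Rabs_triang. rewrite Rabs_Ropp. lra. }
  lra.
Qed.

Lemma D_shift : forall x k, D (x + IZR k) = D x.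
Proof.
  intros x k. apply Rle_antisym.
  - eapply Rle_trans. apply (D_le _ (rnd x + k)). rewrite plus_IZR.
    unfold D. right; f_equal; ring.
  - eapply Rle_trans. apply (D_le _ (rnd (x + IZR k) - k)). rewrite minus_IZR.
    unfold D. right; f_equal; ring.
Qed.

Lemma D_int : forall k, D (IZR k) = 0.
Proof.
  intros k. apply Rle_antisym. eapply Rle_trans. apply (D_le _ k).
  rewrite Rminus_diag, Rabs_R0; lra. apply D_ge0.
Qed.

Lemma D_opp : forall x, D (- x) = D x.
Proof.
  assert (forall x, D (-x) <= D x).
  { intros x. eapply Rle_trans. apply (D_le _ (- rnd x)). rewrite opp_IZR.
    unfold D. rewrite <- Rabs_Ropp. right; f_equal; ring. }
  intros x. apply Rle_antisym; auto. rewrite <- (Ropp_involutive x) at 1. auto.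
Qed.

Lemma D_add : forall a b, D (a + b) <= D a + D b.
Proof.
  intros a b. eapply Rle_trans. apply (D_le _ (rnd a + rnd b)). rewrite plus_IZR.
  unfold D. replace (a + b - (IZR (rnd a) + IZR (rnd b))) with
    ((a - IZR (rnd a)) + (b - IZR (rnd b))) by ring. apply Rabs_triang.
Qed.

Lemma D_diff : forall a b, Rabs (D a - D b) <= D (a - b).
Proof.
  intros a b. apply Rabs_le. split.
  - pose proof (D_add (b - a) a). replace (b - a + a) with b in H by ring.
    assert (E : D (b - a) = D (a - b)) by (rewrite <- D_opp; f_equal; ring). lra.
  - pose proof (D_add (a - b) b). replace (a - b + b) with a in H by ring. lra.
Qed.

Lemma D_le_abs : forall x, D x <= Rabs x.
Proof. intros. eapply Rle_trans. apply (D_le _ 0). rewrite Rminus_0_r; lra. Qed.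

Lemma D_small : forall x, Rabs x < /2 -> D x = Rabs x.
Proof.
  intros x Hx. destruct (Z.eq_dec (rnd x) 0) as [E|E].
  - unfold D. rewrite E, Rminus_0_r. reflexivity.
  - exfalso. pose proof (IZR_nz_ge1 _ E). pose proof (rnd_spec x).
    assert (Rabs (IZR (rnd x)) <= Rabs x + Rabs (x - IZR (rnd x))).
    { replace (IZR (rnd x)) with (x - (x - IZR (rnd x))) at 1 by ring.
      eapply Rle_trans. apply Rabs_triang. rewrite Rabs_Ropp. lra. }
    lra.
Qed.


Lemma pow2_pos : forall k, 0 < 2 ^ k.
Proof. intros; apply pow_lt; lra. Qed.

Lemma INR_lt_pow2 : forall n, INR n < 2 ^ n.
Proof.
  induction n. simpl; lra. rewrite S_INR. simpl.
  assert (1 <= 2 ^ n) by (apply pow_R1_Rle; lra). lra.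
Qed.

Lemma pow2_large : forall x, exists k, x < 2 ^ k.
Proof.
  intros x. destruct (archimed x) as [H _].
  exists (Z.to_nat (up x)). destruct (Z_le_gt_dec 0 (up x)).
  - eapply Rlt_le_trans. apply H. rewrite <- (Z2Nat.id (up x)) at 1 by lia.
    rewrite <- INR_IZR_INZ. left; apply INR_lt_pow2.
  - assert (IZR (up x) <= 0) by (apply IZR_le; lia). pose proof (pow2_pos (Z.to_nat (up x))). lra.
Qed.

Definition term (k : nat) (t : R) : R := (/2) ^ k * D (t / 2 ^ k).

Lemma half_pow_pos : forall k, 0 < (/2) ^ k.
Proof. intros; apply pow_lt; lra. Qed.

Lemma half_pow_le1 : forall k, (/2) ^ k <= 1.
Proof. induction k. simpl; lra. simpl. pose proof (half_pow_pos k). nra. Qed.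

Lemma half_pow_mono : forall k m, (m <= k)%nat -> (/2) ^ k <= (/2) ^ m.
Proof.
  intros k m H. replace k with ((k - m) + m)%nat by lia. rewrite pow_add.
  pose proof (half_pow_le1 (k - m)). pose proof (half_pow_pos m). pose proof (half_pow_pos (k-m)). nra.
Qed.

Lemma term_ge0 : forall k t, 0 <= term k t.
Proof. intros; unfold term. apply Rmult_le_pos. left; apply half_pow_pos. apply D_ge0. Qed.

Lemma term_le_half : forall k t, term k t <= /2.
Proof.
  intros; unfold term. pose proof (half_pow_le1 k). pose proof (half_pow_pos k).
  pose proof (D_half (t / 2 ^ k)). pose proof (D_ge0 (t / 2 ^ k)). nra.
Qed.

Lemma term_add : forall k a b, term k (a + b) <= term k a + term k b.
Proof.
  intros; unfold term. rewrite <- Rmult_plus_distr_l. apply Rmult_le_compat_l.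
  left; apply half_pow_pos. unfold Rdiv. rewrite Rmult_plus_distr_r. apply D_add.
Qed.

Lemma term_opp : forall k t, term k (- t) = term k t.
Proof. intros; unfold term. unfold Rdiv. rewrite Ropp_mult_distr_l_reverse, D_opp. reflexivity. Qed.

Lemma term_le_abs : forall k t, term k t <= Rabs t.
Proof.
  intros; unfold term. pose proof (D_le_abs (t / 2 ^ k)).
  unfold Rdiv in *. rewrite Rabs_mult, Rabs_inv, (Rabs_right (2 ^ k)) in H
    by (left; apply pow2_pos).
  pose proof (pow2_pos k). pose proof (half_pow_pos k). pose proof (half_pow_le1 k).
  assert (Rabs t * / 2 ^ k <= Rabs t).
  { assert (1 <= 2 ^ k) by (apply pow_R1_Rle; lra).
    pose proof (Rabs_pos t). apply Rmult_le_reg_r with (2 ^ k). lra.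
    rewrite Rmult_assoc, Rinv_l by lra. nra. }
  pose proof (D_ge0 (t * / 2 ^ k)). nra.
Qed.

Definition fset (t : R) : R -> Prop := fun v => exists k, v = term k t.

Lemma fset_bound : forall t, bound (fset t).
Proof. intros t. exists (/2). intros v [k ->]. apply term_le_half. Qed.

Lemma fset_ne : forall t, exists v, fset t v.
Proof. intros t. exists (term 0 t). exists 0%nat. reflexivity. Qed.

Definition f (t : R) : R := proj1_sig (completeness (fset t) (fset_bound t) (fset_ne t)).

Lemma term_le_f : forall k t, term k t <= f t.
Proof.
  intros k t. unfold f. destruct (completeness _ _ _) as [m [Hm Hm1]]. simpl.
  apply Hm. exists k; reflexivity.
Qed.

Lemma f_le : forall t B, (forall k, term k t <= B) -> f t <= B.
Proof.
  intros t B H. unfold f. destruct (completeness _ _ _) as [m [Hm0 Hm]]. simpl.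
  apply Hm. intros v [k ->]. apply H.
Qed.

Lemma f_ge0 : forall t, 0 <= f t.
Proof. intros. eapply Rle_trans. apply (term_ge0 0). apply term_le_f. Qed.

Lemma f_add : forall a b, f (a + b) <= f a + f b.
Proof.
  intros. apply f_le. intros k. eapply Rle_trans. apply term_add.
  pose proof (term_le_f k a). pose proof (term_le_f k b). lra.
Qed.

Lemma f_opp : forall t, f (- t) = f t.
Proof.
  assert (forall t, f (- t) <= f t).
  { intros t. apply f_le. intros k. rewrite term_opp. apply term_le_f. }
  intros t. apply Rle_antisym; auto. rewrite <- (Ropp_involutive t) at 1. apply H.
Qed.

Lemma f_le_abs : forall t, f t <= Rabs t.
Proof. intros. apply f_le. intros; apply term_le_abs. Qed.

Lemma f_0 : f 0 = 0.
Proof. apply Rle_antisym. eapply Rle_trans. apply f_le_abs. rewrite Rabs_R0; lra. apply f_ge0. Qed.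

Lemma D_over_pow : forall k t, D (t / 2 ^ k) <= 2 ^ k * f t.
Proof.
  intros. pose proof (term_le_f k t). unfold term in H.
  pose proof (pow2_pos k).
  replace (D (t / 2 ^ k)) with (2 ^ k * ((/2) ^ k * D (t / 2 ^ k))).
  apply Rmult_le_compat_l; lra.
  rewrite <- Rmult_assoc, <- Rpow_mult_distr, Rinv_r, pow1 by lra. ring.
Qed.

Lemma f_lower : forall k t, Rabs t < 2 ^ k / 2 -> (/2) ^ k * (Rabs t / 2 ^ k) <= f t.
Proof.
  intros k t H. pose proof (term_le_f k t). unfold term in H0.
  pose proof (pow2_pos k).
  rewrite D_small in H0.
  - unfold Rdiv in *. rewrite Rabs_mult, Rabs_inv, (Rabs_right (2 ^ k)) in H0 by lra. exact H0.
  - unfold Rdiv in *. rewrite Rabs_mult, Rabs_inv, (Rabs_right (2 ^ k)) by lra.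
    apply Rmult_lt_reg_r with (2 ^ k). lra. rewrite Rmult_assoc, Rinv_l by lra. lra.
Qed.

Lemma f_zero : forall t, f t = 0 -> t = 0.
Proof.
  intros t H. destruct (pow2_large (2 * Rabs t + 1)) as [k Hk].
  assert (Rabs t < 2 ^ k / 2) by lra. pose proof (f_lower k t H0).
  rewrite H in H1. pose proof (half_pow_pos k). pose proof (pow2_pos k).
  assert (0 <= Rabs t / 2 ^ k) by (apply Rmult_le_pos; [apply Rabs_pos| left; apply Rinv_0_lt_compat; lra]).
  assert (Rabs t / 2 ^ k = 0) by nra.
  assert (Rabs t = 0). { unfold Rdiv in H5. apply Rmult_integral in H5. destruct H5; auto.
    exfalso. pose proof (Rinv_0_lt_compat _ H3). lra. }
  destruct (Req_dec t 0); auto. exfalso. pose proof (Rabs_pos_lt t H7). lra.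
Qed.

Lemma f_pow2 : forall m, f (2 ^ m) <= (/2) ^ m.
Proof.
  intros m. apply f_le. intros k. unfold term. destruct (le_lt_dec k m).
  - replace (2 ^ m / 2 ^ k) with (IZR (2 ^ Z.of_nat (m - k))).
    rewrite D_int. rewrite Rmult_0_r. left; apply half_pow_pos.
    rewrite <- pow_IZR. replace m with ((m - k) + k)%nat at 2 by lia. rewrite pow_add.
    field. apply pow_nonzero; lra.
  - pose proof (D_le_abs (2 ^ m / 2 ^ k)). rewrite Rabs_right in H.
    2:{ apply Rle_ge. unfold Rdiv. apply Rmult_le_pos. left; apply pow2_pos. left; apply Rinv_0_lt_compat, pow2_pos. }
    assert (2 ^ m / 2 ^ k <= 1).
    { replace k with ((k - m) + m)%nat by lia. rewrite pow_add. unfold Rdiv.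
      rewrite Rinv_mult. pose proof (pow2_pos m). pose proof (pow2_pos (k - m)).
      rewrite (Rmult_comm (/ 2 ^ (k - m))), <- Rmult_assoc, Rinv_r by lra.
      assert (1 <= 2 ^ (k - m)) by (apply pow_R1_Rle; lra).
      rewrite Rmult_1_l. rewrite <- Rinv_1. apply Rinv_le_contravar; lra. }
    assert ((/2) ^ k <= (/2) ^ m) by (apply half_pow_mono; lia).
    pose proof (D_ge0 (2 ^ m / 2 ^ k)). pose proof (half_pow_pos k). nra.
Qed.


Fixpoint a (n : nat) : R := match n with O => 0 | S n => 4 * a n + 1 end.

Lemma a_ge0 : forall n, 0 <= a n.
Proof. induction n; simpl; lra. Qed.

Lemma a_step : forall n, a n + 1 <= a (S n).
Proof. intros; simpl; pose proof (a_ge0 n); lra. Qed.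

Lemma a_lt : forall j n, (j < n)%nat -> a j + 1 <= a n.
Proof.
  intros j n H. induction H. apply a_step.
  pose proof (a_step m). lra.
Qed.

Lemma a_le : forall j n, (j <= n)%nat -> a j <= a n.
Proof. intros j n H. destruct (Nat.eq_dec j n). subst; lra. pose proof (a_lt j n ltac:(lia)); lra. Qed.

Lemma a_int : forall n, exists z, a n = IZR z.
Proof.
  induction n. exists 0%Z; reflexivity. destruct IHn as [z Hz]. exists (4 * z + 1)%Z.
  cbn [a]. rewrite Hz, plus_IZR, mult_IZR. reflexivity.
Qed.

Lemma a_3 : forall n, 3 * a n + 1 = 4 ^ n.
Proof. induction n; simpl; lra. Qed.

Lemma a_split : forall m j, a (j + m) = 4 ^ m * a j + a m.
Proof.
  intros m j. pose proof (a_3 (j + m)). pose proof (a_3 j). pose proof (a_3 m).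
  rewrite pow_add in H. assert (3 * a (j + m) = 3 * (4 ^ m * a j + a m)) by nra. lra.
Qed.

Lemma pow4 : forall m, 4 ^ m = 2 ^ (2 * m).
Proof. intros. rewrite pow_mult. f_equal. lra. Qed.

Definition Bk (P : nat -> Prop) (n : nat) (x : R) : Prop :=
  x = a n \/ (exists j, n = S j /\ P j /\ a n <= x <= a n + /2).

Definition A (P : nat -> Prop) (x : R) : Prop := exists n, Bk P n x.

Lemma Bk_range : forall P n x, Bk P n x -> a n <= x <= a n + /2.
Proof. intros P n x [->|[j [_ [_ H]]]]; lra. Qed.

Lemma Bk_sep : forall P n n' x x', Bk P n x -> Bk P n' x' -> Rabs (x - x') < /2 -> n = n'.
Proof.
  intros P n n' x x' H H' Hd. apply Bk_range in H. apply Bk_range in H'.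
  destruct (lt_eq_lt_dec n n') as [[Hl|]|Hl]; auto; exfalso.
  - pose proof (a_lt _ _ Hl). apply Rabs_def2 in Hd. lra.
  - pose proof (a_lt _ _ Hl). apply Rabs_def2 in Hd. lra.
Qed.

Lemma A_0 : forall P, A P 0.
Proof. intros. exists 0%nat. left; reflexivity. Qed.

Lemma A_ge0 : forall P x, A P x -> 0 <= x.
Proof. intros P x [n H]. apply Bk_range in H. pose proof (a_ge0 n). lra. Qed.

Definition tset (P : nat -> Prop) (y : R) : R -> Prop :=
  fun v => exists z, A P z /\ v = - f (y - z).

Lemma tset_bound : forall P y, bound (tset P y).
Proof. intros P y. exists 0. intros v [z [_ ->]]. pose proof (f_ge0 (y - z)). lra. Qed.

Lemma tset_ne : forall P y, exists v, tset P y v.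
Proof. intros P y. exists (- f (y - 0)). exists 0. split; auto. apply A_0. Qed.

Definition theta (P : nat -> Prop) (y : R) : R :=
  - proj1_sig (completeness (tset P y) (tset_bound P y) (tset_ne P y)).

Lemma theta_le : forall P y z, A P z -> theta P y <= f (y - z).
Proof.
  intros P y z Hz. unfold theta. destruct (completeness _ _ _) as [m [Hm Hm1]]. simpl.
  assert (- f (y - z) <= m) by (apply Hm; exists z; auto). lra.
Qed.

Lemma theta_ge : forall P y B, (forall z, A P z -> B <= f (y - z)) -> B <= theta P y.
Proof.
  intros P y B H. unfold theta. destruct (completeness _ _ _) as [m [Hm Hm1]]. simpl.
  assert (m <= - B). { apply Hm1. intros v [z [Hz ->]]. pose proof (H z Hz). lra. } lra.
Qed.

Lemma theta_ge0 : forall P y, 0 <= theta P y.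
Proof. intros. apply theta_ge. intros; apply f_ge0. Qed.

Lemma theta_lip : forall P u v, theta P u <= theta P v + f (u - v).
Proof.
  intros P u v. assert (theta P u - f (u - v) <= theta P v).
  { apply theta_ge. intros z Hz. pose proof (theta_le P u z Hz).
    pose proof (f_add (u - v) (v - z)). replace (u - v + (v - z)) with (u - z) in H0 by ring. lra. }
  lra.
Qed.

Lemma theta_lip_abs : forall P u v, Rabs (theta P u - theta P v) <= f (u - v).
Proof.
  intros. apply Rabs_le. pose proof (theta_lip P u v). pose proof (theta_lip P v u).
  rewrite <- f_opp in H0. replace (- (v - u)) with (u - v) in H0 by ring. lra.
Qed.

Lemma theta_A : forall P z, A P z -> theta P z = 0.
Proof.
  intros. apply Rle_antisym. pose proof (theta_le P z z H). rewrite Rminus_diag, f_0 in H0. exact H0.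
  apply theta_ge0.
Qed.

Lemma theta_small : forall P y e, theta P y < e -> exists z, A P z /\ f (y - z) < e.
Proof.
  intros P y e H. apply NNPP. intro Hn. assert (e <= theta P y).
  { apply theta_ge. intros z Hz. apply Rnot_lt_le. intro. apply Hn. exists z; auto. } lra.
Qed.


Lemma far_block : forall P x m n z, (m <= n)%nat -> Bk P n z ->
  10 * (Rabs x + 2) < 4 ^ m -> D ((x - z) / 4 ^ m) < /8 -> False.
Proof.
  intros P x m n z Hmn Hz Hm HD. apply Bk_range in Hz.
  set (u := z - a n). assert (Hu : 0 <= u <= /2) by (unfold u; lra).
  pose proof (a_split m (n - m)) as Hs. replace (n - m + m)%nat with n in Hs by lia.
  destruct (a_int (n - m)) as [k Hk]. rewrite Hk in Hs.
  set (p := 4 ^ m) in *. assert (Hp : 0 < p) by (unfold p; apply pow_lt; lra).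
  set (w := (x - u - a m) / p).
  assert (Hw : (x - z) / p = w + IZR (- k)).
  { unfold w, u. rewrite opp_IZR, Hs. field. lra. }
  rewrite Hw, D_shift in HD. unfold D in HD. set (M := rnd w) in HD.
  apply Rabs_def2 in HD. destruct HD as [HD1 HD2].
  assert (Hwp : w * p = x - u - a m) by (unfold w; field; lra).
  assert (H1 : (w - IZR M) * p < /8 * p) by (apply Rmult_lt_compat_r; lra).
  assert (H2 : - /8 * p < (w - IZR M) * p) by (apply Rmult_lt_compat_r; lra).
  pose proof (a_3 m) as H3. fold p in H3.
  pose proof (Rle_abs x). pose proof (Rle_abs (-x)). rewrite Rabs_Ropp in H0.
  destruct (Z_le_gt_dec 0 M) as [HM|HM].
  - assert (0 <= IZR M) by (apply IZR_le; lia).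
    assert (0 <= IZR M * p) by (apply Rmult_le_pos; lra). nra.
  - assert (IZR M <= -1) by (apply IZR_le; lia).
    assert (IZR M * p <= - p) by nra. nra.
Qed.

Lemma f_small_D : forall t K, f t < /8 * (/2) ^ K -> D (t / 2 ^ K) < /8.
Proof.
  intros t K H. pose proof (D_over_pow K t). pose proof (pow2_pos K).
  assert (2 ^ K * f t < 2 ^ K * (/8 * (/2) ^ K)) by (apply Rmult_lt_compat_l; lra).
  replace (2 ^ K * (/8 * (/2) ^ K)) with (/8 * (2 * /2) ^ K) in H2 by (rewrite Rpow_mult_distr; ring).
  rewrite Rinv_r, pow1 in H2 by lra. lra.
Qed.

Lemma f_small_abs : forall t k d, Rabs t < 2 ^ k / 2 -> f t < (/2) ^ k * (d / 2 ^ k) -> Rabs t < d.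
Proof.
  intros t k d H1 H2. pose proof (f_lower k t H1). pose proof (half_pow_pos k). pose proof (pow2_pos k).
  assert (Rabs t / 2 ^ k < d / 2 ^ k).
  { apply Rmult_lt_reg_l with ((/2) ^ k). lra. lra. }
  unfold Rdiv in H4. apply Rmult_lt_reg_r in H4. lra. apply Rinv_0_lt_compat; lra.
Qed.

Lemma theta_near : forall P x, (forall e, 0 < e -> theta P x < e) ->
  forall d, 0 < d -> exists z, A P z /\ Rabs (x - z) < d.
Proof.
  intros P x Hx d Hd.
  destruct (pow2_large (10 * (Rabs x + 2))) as [m Hm].
  assert (Hm4 : 10 * (Rabs x + 2) < 4 ^ m).
  { rewrite pow4. eapply Rlt_le_trans. apply Hm. apply Rle_pow; lia || lra. }
  destruct (pow2_large (2 * (Rabs x + a m + 1))) as [k2 Hk2].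
  set (e := Rmin (/8 * (/2) ^ (2 * m)) ((/2) ^ k2 * (d / 2 ^ k2))).
  assert (He : 0 < e).
  { unfold e. apply Rmin_pos. pose proof (half_pow_pos (2 * m)); lra.
    apply Rmult_lt_0_compat. apply half_pow_pos. unfold Rdiv. apply Rmult_lt_0_compat. lra.
    apply Rinv_0_lt_compat, pow2_pos. }
  destruct (theta_small P x e (Hx e He)) as [z [[n Hz] Hf]].
  exists z. split. exists n; exact Hz.
  destruct (le_lt_dec m n) as [Hmn|Hmn].
  - exfalso. apply (far_block P x m n z Hmn Hz Hm4). rewrite pow4. apply f_small_D.
    eapply Rlt_le_trans. apply Hf. apply Rmin_l.
  - apply Bk_range in Hz. pose proof (a_lt _ _ Hmn). pose proof (a_ge0 n).
    apply (f_small_abs _ k2). apply Rabs_def1.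
    + pose proof (Rle_abs x). lra.
    + pose proof (Rle_abs (-x)). rewrite Rabs_Ropp in H1. lra.
    + eapply Rlt_le_trans. apply Hf. apply Rmin_r.
Qed.

Lemma theta_zero : forall P x, (forall e, 0 < e -> theta P x < e) -> A P x.
Proof.
  intros P x Hx. pose proof (theta_near P x Hx) as Hn.
  destruct (Hn (/4) ltac:(lra)) as [z0 [[n0 Hz0] Hd0]].
  assert (Hb : forall d, 0 < d -> exists z, Bk P n0 z /\ Rabs (x - z) < d).
  { intros d Hd. assert (H4 : 0 < /4) by lra.
    destruct (Hn (Rmin d (/4)) (Rmin_pos _ _ Hd H4)) as [z [[n Hz] Hdz]].
    exists z. assert (n = n0).
    { apply (Bk_sep P n n0 z z0 Hz Hz0).
      replace (z - z0) with (-(x - z) + (x - z0)) by ring.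
      eapply Rle_lt_trans. apply Rabs_triang. rewrite Rabs_Ropp.
      pose proof (Rmin_r d (/4)). lra. }
    subst n. split; auto. eapply Rlt_le_trans. apply Hdz. apply Rmin_l. }
  exists n0.
  destruct (classic (exists j, n0 = S j /\ P j)) as [[j [Hj Pj]]|Hno].
  - right. exists j. split; auto. split; auto.
    assert (a n0 <= x).
    { apply Rnot_lt_le. intro. destruct (Hb (a n0 - x) ltac:(lra)) as [z [Hz Hdz]].
      apply Bk_range in Hz. apply Rabs_def2 in Hdz. lra. }
    assert (x <= a n0 + /2).
    { apply Rnot_lt_le. intro. destruct (Hb (x - (a n0 + /2)) ltac:(lra)) as [z [Hz Hdz]].
      apply Bk_range in Hz. apply Rabs_def2 in Hdz. lra. }
    lra.
  - left. apply Rle_antisym; apply Rnot_lt_le; intro;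
    destruct (Hb (Rabs (x - a n0)) ltac:(apply Rabs_pos_lt; lra)) as [z [[Hz|Hz] Hdz]];
    try (subst z; lra); exfalso; apply Hno; destruct Hz as [j [Hj [Pj _]]]; eauto.
Qed.


Definition psi (P : nat -> Prop) (x : R) : R := theta P (Rmin x 0).

Definition dd (P : nat -> Prop) (x y : R) : R := f (x - y) + Rabs (psi P x - psi P y).

Definition Tp (P : nat -> Prop) : topology_on_R :=
  fun U => forall x, U x -> exists e, 0 < e /\ forall y, dd P x y < e -> U y.

Lemma Rmin0_lip : forall x y, Rabs (Rmin x 0 - Rmin y 0) <= Rabs (x - y).
Proof.
  intros. unfold Rmin. destruct (Rle_dec x 0); destruct (Rle_dec y 0);
  apply Rabs_le; pose proof (Rle_abs (x - y)); pose proof (Rle_abs (-(x - y)));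
  rewrite Rabs_Ropp in *; lra.
Qed.

Lemma psi_lip : forall P x y, Rabs (psi P x - psi P y) <= f (Rmin x 0 - Rmin y 0).
Proof. intros. apply theta_lip_abs. Qed.

Lemma dd_le : forall P x y, dd P x y <= 2 * Rabs (x - y).
Proof.
  intros. unfold dd. pose proof (f_le_abs (x - y)). pose proof (psi_lip P x y).
  pose proof (f_le_abs (Rmin x 0 - Rmin y 0)). pose proof (Rmin0_lip x y). lra.
Qed.

Lemma dd_ge_f : forall P x y, f (x - y) <= dd P x y.
Proof. intros. unfold dd. pose proof (Rabs_pos (psi P x - psi P y)). lra. Qed.

Lemma dd_ge0 : forall P x y, 0 <= dd P x y.
Proof. intros. eapply Rle_trans. apply f_ge0. apply dd_ge_f. Qed.

Lemma dd_sym : forall P x y, dd P x y = dd P y x.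
Proof.
  intros. unfold dd. rewrite <- f_opp, Rabs_minus_sym. f_equal. f_equal. ring.
Qed.

Lemma dd_tri : forall P x y z, dd P x z <= dd P x y + dd P y z.
Proof.
  intros. unfold dd. pose proof (f_add (x - y) (y - z)). replace (x - y + (y - z)) with (x - z) in H by ring.
  pose proof (Rabs_triang (psi P x - psi P y) (psi P y - psi P z)).
  replace (psi P x - psi P y + (psi P y - psi P z)) with (psi P x - psi P z) in H0 by ring. lra.
Qed.

Lemma dd_refl : forall P x, dd P x x = 0.
Proof. intros. unfold dd. rewrite !Rminus_diag, f_0, Rabs_R0. ring. Qed.

Lemma dd_metric : forall P, is_metric (dd P).
Proof.
  intros P. split; [|split; [|split]].
  - apply dd_ge0.
  - intros x y. split.
    + intros H. pose proof (dd_ge_f P x y). pose proof (f_ge0 (x - y)).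
      assert (f (x - y) = 0) by lra. apply f_zero in H2. lra.
    + intros ->. apply dd_refl.
  - apply dd_sym.
  - apply dd_tri.
Qed.

Lemma ball_open : forall P x r, Tp P (fun y => dd P x y < r).
Proof.
  intros P x r y Hy. exists (r - dd P x y). split. lra.
  intros z Hz. pose proof (dd_tri P x y z). lra.
Qed.

Lemma Tp_topology : forall P, is_topology (Tp P).
Proof.
  intros P. split; [|split; [|split]].
  - intros x [].
  - intros x _. exists 1. split. lra. auto.
  - intros U V HU HV x [Ux Vx]. destruct (HU x Ux) as [e1 [He1 H1]].
    destruct (HV x Vx) as [e2 [He2 H2]]. exists (Rmin e1 e2). split. apply Rmin_pos; auto.
    intros y Hy. split. apply H1. eapply Rlt_le_trans. apply Hy. apply Rmin_l.
    apply H2. eapply Rlt_le_trans. apply Hy. apply Rmin_r.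
  - intros F HF x [U [FU Ux]]. destruct (HF U FU x Ux) as [e [He H]].
    exists e. split; auto. intros y Hy. exists U. auto.
Qed.

Lemma Tp_haus : forall P, hausdorff (Tp P).
Proof.
  intros P x y Hxy. set (r := dd P x y / 2).
  assert (0 < dd P x y). { pose proof (dd_ge0 P x y). destruct H; auto.
    exfalso. apply Hxy. apply (dd_metric P). auto. }
  exists (fun z => dd P x z < r), (fun z => dd P y z < r).
  split. apply ball_open. split. apply ball_open.
  split. rewrite dd_refl. unfold r; lra. split. rewrite dd_refl. unfold r; lra.
  intros z [H1 H2]. pose proof (dd_tri P x z y). rewrite (dd_sym P z y) in H0. unfold r in *. lra.
Qed.

Lemma Tp_coarser : forall P, coarser (Tp P) eta.
Proof.
  intros P U HU x Ux. destruct (HU x Ux) as [e [He H]].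
  assert (Hp : 0 < e / 2) by lra. exists (mkposreal _ Hp). intros y Hy.
  unfold disc in Hy. simpl in Hy. apply H. pose proof (dd_le P x y).
  rewrite Rabs_minus_sym in Hy. lra.
Qed.

Lemma Tp_metrizable : forall P, metrizable (Tp P).
Proof. intros P. exists (dd P). split. apply dd_metric. intros U. reflexivity. Qed.


Lemma choose_m : forall e c, 0 < e -> exists m, (/2) ^ m < e /\ c < 2 ^ m.
Proof.
  intros e c He. destruct (pow2_large (Rmax (/e) c)) as [m Hm]. exists m.
  pose proof (Rmax_l (/e) c). pose proof (Rmax_r (/e) c). split; [|lra].
  rewrite pow_inv. pose proof (pow2_pos m).
  replace e with (/ / e) by (field; lra). apply Rinv_lt_contravar.
  apply Rmult_lt_0_compat; auto. apply Rinv_0_lt_compat; auto. lra.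
Qed.

Lemma theta_0 : forall P, theta P 0 = 0.
Proof. intros. apply theta_A, A_0. Qed.

Lemma psi_pos : forall P x, 0 <= x -> psi P x = 0.
Proof. intros. unfold psi. rewrite Rmin_right by lra. apply theta_0. Qed.

Lemma psi_neg : forall P x, x <= 0 -> psi P x = theta P x.
Proof. intros. unfold psi. rewrite Rmin_left by lra. reflexivity. Qed.

Lemma f_pow2' : forall m, f (- 2 ^ m) <= (/2) ^ m.
Proof. intros. rewrite f_opp. apply f_pow2. Qed.

Lemma close_right : forall P x m, 0 <= x -> dd P x (x + 2 ^ m) <= (/2) ^ m.
Proof.
  intros. unfold dd. rewrite psi_pos, psi_pos by (try pose proof (pow2_pos m); lra).
  replace (x - (x + 2 ^ m)) with (- 2 ^ m) by ring. rewrite Rminus_diag, Rabs_R0.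
  pose proof (f_pow2' m). lra.
Qed.

Lemma close_left : forall P x m, x <= 0 -> dd P x (x - 2 ^ m) <= 2 * (/2) ^ m.
Proof.
  intros. unfold dd. pose proof (pow2_pos m).
  rewrite psi_neg, psi_neg by lra.
  replace (x - (x - 2 ^ m)) with (2 ^ m) by ring.
  pose proof (theta_lip_abs P x (x - 2 ^ m)). replace (x - (x - 2 ^ m)) with (2 ^ m) in H1 by ring.
  pose proof (f_pow2 m). lra.
Qed.

Lemma close_left_A : forall P x m, A P x -> dd P x (x - 2 ^ m) <= 2 * (/2) ^ m.
Proof.
  intros P x m HA. pose proof (A_ge0 P x HA). pose proof (pow2_pos m).
  unfold dd. rewrite psi_pos by lra.
  replace (x - (x - 2 ^ m)) with (2 ^ m) by ring. pose proof (f_pow2 m).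
  destruct (Rle_dec (x - 2 ^ m) 0).
  - rewrite psi_neg by lra. rewrite <- (theta_A P x HA).
    pose proof (theta_lip_abs P x (x - 2 ^ m)). replace (x - (x - 2 ^ m)) with (2 ^ m) in H2 by ring. lra.
  - apply Rnot_le_lt in n. rewrite psi_pos by lra. rewrite Rminus_diag, Rabs_R0. pose proof (half_pow_pos m). lra.
Qed.

Definition Pp (P : nat -> Prop) (x : R) : Prop :=
  forall M e, 0 < e -> exists y, M <= y /\ dd P x y < e.
Definition Pm (P : nat -> Prop) (x : R) : Prop :=
  forall M e, 0 < e -> exists y, y <= M /\ dd P x y < e.

Lemma Pp_iff : forall P x, Pp P x <-> 0 <= x.
Proof.
  intros P x. split.
  - intros H. destruct (Rle_dec 0 x) as [|n]; auto. apply Rnot_le_lt in n. exfalso.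
    assert (A P x). { apply theta_zero. intros e He. destruct (H 0 e He) as [y [Hy Hd]].
      unfold dd in Hd. rewrite psi_neg, psi_pos in Hd by lra.
      pose proof (f_ge0 (x - y)). pose proof (Rle_abs (theta P x - 0)). lra. }
    pose proof (A_ge0 P x H0). lra.
  - intros Hx M e He. destruct (choose_m e (Rabs M + Rabs x) He) as [m [H1 H2]].
    exists (x + 2 ^ m). split. pose proof (Rle_abs M). pose proof (Rle_abs (-x)). rewrite Rabs_Ropp in *. lra.
    pose proof (close_right P x m Hx). lra.
Qed.

Lemma Pm_iff : forall P x, Pm P x <-> x <= 0 \/ A P x.
Proof.
  intros P x. split.
  - intros H. destruct (Rle_dec x 0) as [|n]; auto. apply Rnot_le_lt in n. right. apply theta_zero.
    intros e He. assert (He2 : 0 < e / 2) by lra. destruct (H 0 (e/2) He2) as [y [Hy Hd]].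
    unfold dd in Hd. rewrite psi_pos, psi_neg in Hd by lra.
    pose proof (theta_lip P x y). pose proof (f_ge0 (x - y)).
    pose proof (Rle_abs (-(0 - theta P y))). rewrite Rabs_Ropp in H2. lra.
  - intros Hx M e He. assert (He2 : 0 < e / 2) by lra.
    destruct (choose_m (e/2) (Rabs M + Rabs x) He2) as [m [H1 H2]].
    exists (x - 2 ^ m). split. pose proof (Rle_abs (-M)). pose proof (Rle_abs x). rewrite Rabs_Ropp in H. lra.
    destruct Hx as [Hx|Hx].
    + pose proof (close_left P x m Hx). lra.
    + pose proof (close_left_A P x m Hx). lra.
Qed.

Lemma Tp_first_category : forall P, first_category (Tp P).
Proof.
  intros P. exists (fun n x => - INR n <= x <= INR n). split.
  - intros n U HU Hcl x Ux. destruct (HU x Ux) as [e [He HB]].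
    destruct (choose_m (e / 2) (Rabs x + INR n + 1) ltac:(lra)) as [m [H1 H2]].
    set (y := if Rle_dec 0 x then x + 2 ^ m else x - 2 ^ m).
    assert (Hy : dd P x y < e).
    { unfold y. destruct (Rle_dec 0 x).
      + pose proof (close_right P x m r). lra.
      + pose proof (close_left P x m ltac:(lra)). lra. }
    assert (Hya : INR n + 1 <= Rabs y).
    { unfold y. pose proof (pow2_pos m). destruct (Rle_dec 0 x).
      + rewrite Rabs_right by lra. rewrite Rabs_right in H2 by lra. lra.
      + rewrite Rabs_left by lra. rewrite Rabs_left in H2 by lra. lra. }
    destruct (pow2_large (2 * (Rabs y + INR n + 1))) as [k Hk].
    set (r := (/2) ^ k * (1 / 2 ^ k)).
    assert (Hr : 0 < r). { unfold r. apply Rmult_lt_0_compat. apply half_pow_pos.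
      unfold Rdiv. rewrite Rmult_1_l. apply Rinv_0_lt_compat, pow2_pos. }
    destruct (Hcl y (HB y Hy) (fun w => dd P y w < r) (ball_open P y r)) as [w [Hw Aw]].
    { rewrite dd_refl. exact Hr. }
    assert (Hyw : 1 <= Rabs (y - w)).
    { pose proof (Rabs_triang_inv y w). assert (Rabs w <= INR n) by (apply Rabs_le; lra). lra. }
    assert (Hyw2 : Rabs (y - w) < 2 ^ k / 2).
    { pose proof (Rabs_triang y (- w)). rewrite Rabs_Ropp in H. assert (Rabs w <= INR n) by (apply Rabs_le; lra).
      unfold Rminus. lra. }
    pose proof (f_lower k (y - w) Hyw2). pose proof (dd_ge_f P y w).
    assert (r <= (/2) ^ k * (Rabs (y - w) / 2 ^ k)).
    { unfold r. apply Rmult_le_compat_l. left; apply half_pow_pos. unfold Rdiv.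
      apply Rmult_le_compat_r. left; apply Rinv_0_lt_compat, pow2_pos. exact Hyw. }
    lra.
  - intros x. exists (Z.to_nat (up (Rabs x))). rewrite INR_IZR_INZ.
    destruct (archimed (Rabs x)) as [H _].
    assert (0 <= up (Rabs x))%Z. { apply le_IZR. pose proof (Rabs_pos x). lra. }
    rewrite Z2Nat.id by exact H0. pose proof (Rle_abs x). pose proof (Rle_abs (-x)). rewrite Rabs_Ropp in *. lra.
Qed.


Lemma cont_pt_eps : forall (g : R -> R) x,
  (forall e, 0 < e -> exists d, 0 < d /\ forall y, Rabs (y - x) < d -> Rabs (g y - g x) < e) ->
  continuity_pt g x.
Proof.
  intros g x H e He. destruct (H e He) as [d [Hd H1]]. exists d. split. lra.
  intros y [_ Hy]. simpl in *. unfold R_dist in *. apply H1. exact Hy.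
Qed.

Lemma metric_cont : forall P Q h, continuous_between (Tp P) (Tp Q) h ->
  forall x e, 0 < e -> exists d, 0 < d /\ forall y, dd P x y < d -> dd Q (h x) (h y) < e.
Proof.
  intros P Q h Hc x e He. pose proof (Hc _ (ball_open Q (h x) e)) as Ho.
  destruct (Ho x) as [d [Hd H]]. simpl. rewrite dd_refl. exact He. exists d; auto.
Qed.

Lemma eta_cont_D : forall P Q h, continuous_between (Tp P) (Tp Q) h ->
  forall J x0, continuity (fun s => D ((h s - x0) / 2 ^ J)).
Proof.
  intros P Q h Hc J x0 s. apply cont_pt_eps. intros e He.
  pose proof (pow2_pos J).
  assert (He' : 0 < e / 2 ^ J) by (unfold Rdiv; apply Rmult_lt_0_compat; auto; apply Rinv_0_lt_compat; auto).
  destruct (metric_cont P Q h Hc s _ He') as [d [Hd H1]].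
  exists (d / 2). split. lra. intros y Hy.
  assert (dd P s y < d). { pose proof (dd_le P s y). rewrite Rabs_minus_sym in Hy. lra. }
  specialize (H1 y H0).
  eapply Rle_lt_trans. apply D_diff.
  replace ((h y - x0) / 2 ^ J - (h s - x0) / 2 ^ J) with ((h y - h s) / 2 ^ J) by (field; lra).
  eapply Rle_lt_trans. apply D_over_pow.
  pose proof (dd_ge_f Q (h y) (h s)). rewrite dd_sym in H2.
  apply Rmult_lt_reg_r with (/ 2 ^ J). apply Rinv_0_lt_compat; auto.
  replace (2 ^ J * f (h y - h s) * / 2 ^ J) with (f (h y - h s)) by (field; lra). unfold Rdiv in H1. lra.
Qed.

Lemma dichotomy : forall t eps J, D t < eps -> eps <= /4 ->
  D (t / 2 ^ J) < eps / 2 ^ J \/ (1 - eps) / 2 ^ J <= D (t / 2 ^ J).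
Proof.
  intros t eps J Ht Heps. pose proof (pow2_pos J) as HJ.
  set (n := rnd t). set (k := rnd (IZR n / 2 ^ J)).
  assert (Htn : Rabs (t - IZR n) < eps) by exact Ht.
  assert (Hsmall : D ((t - IZR n) / 2 ^ J) < eps / 2 ^ J).
  { eapply Rle_lt_trans. apply D_le_abs. unfold Rdiv. rewrite Rabs_mult, Rabs_inv, (Rabs_right (2 ^ J)) by lra.
    apply Rmult_lt_compat_r. apply Rinv_0_lt_compat; lra. exact Htn. }
  destruct (Z.eq_dec (n - 2 ^ Z.of_nat J * k) 0) as [E|E].
  - left. assert (IZR n = 2 ^ J * IZR k).
    { assert (IZR (n - 2 ^ Z.of_nat J * k) = 0) by (rewrite E; reflexivity).
      rewrite minus_IZR, mult_IZR, <- pow_IZR in H. lra. }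
    replace (t / 2 ^ J) with ((t - IZR n) / 2 ^ J + IZR k) by (rewrite H; field; lra).
    rewrite D_shift. exact Hsmall.
  - right. pose proof (IZR_nz_ge1 _ E) as H1. rewrite minus_IZR, mult_IZR, <- pow_IZR in H1.
    assert (HDn : D (IZR n / 2 ^ J) = Rabs (IZR n - 2 ^ J * IZR k) / 2 ^ J).
    { unfold D. fold k. replace (IZR n - 2 ^ J * IZR k) with ((IZR n / 2 ^ J - IZR k) * 2 ^ J) by (field; lra).
      rewrite Rabs_mult, (Rabs_right (2 ^ J)) by lra. field. lra. }
    assert (H2 : / 2 ^ J <= D (IZR n / 2 ^ J)).
    { rewrite HDn. unfold Rdiv. rewrite <- (Rmult_1_l (/ 2 ^ J)) at 1.
      apply Rmult_le_compat_r. left; apply Rinv_0_lt_compat; lra. exact H1. }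
    pose proof (D_diff (IZR n / 2 ^ J) (t / 2 ^ J)) as H3.
    replace (IZR n / 2 ^ J - t / 2 ^ J) with (- ((t - IZR n) / 2 ^ J)) in H3 by (field; lra).
    rewrite D_opp in H3. apply Rabs_def2 in H3 || idtac.
    assert (D (IZR n / 2 ^ J) - D (t / 2 ^ J) <= D ((t - IZR n) / 2 ^ J)).
    { eapply Rle_trans. apply Rle_abs. exact H3. }
    unfold Rdiv in *. lra.
Qed.


Lemma D_zero : D 0 = 0.
Proof. apply (D_int 0%Z). Qed.

Lemma eta_cont : forall P Q h, continuous_between (Tp P) (Tp Q) h ->
  forall s0 eps, 0 < eps -> exists rho, 0 < rho /\
    forall s, Rabs (s - s0) < rho -> Rabs (h s - h s0) < eps.
Proof.
  intros P Q h Hc s0 eps Heps.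
  set (x0 := h s0). set (e := Rmin eps (/4)).
  assert (He : 0 < e) by (apply Rmin_pos; lra).
  assert (He4 : e <= /4) by apply Rmin_r.
  set (phi := fun J s => D ((h s - x0) / 2 ^ J)).
  assert (Hphi : forall J, continuity (phi J)) by (intros; apply (eta_cont_D P Q h Hc)).
  assert (Hphi0 : forall J, phi J s0 = 0).
  { intros J. unfold phi, x0. unfold Rminus. rewrite Rplus_opp_r. unfold Rdiv. rewrite Rmult_0_l. apply D_zero. }
  destruct (Hphi 0%nat s0 e He) as [rho [Hrho H0]].
  exists rho. split; auto.
  assert (Hu : forall u, Rabs (u - s0) < rho -> D (h u - x0) < e).
  { intros u Hu. destruct (Req_dec u s0) as [->|Hne].
    - fold x0. rewrite Rminus_diag, D_zero. lra.
    - specialize (H0 u (conj (conj I (not_eq_sym Hne)) Hu)). simpl in H0. unfold R_dist in H0.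
      rewrite Hphi0 in H0. unfold phi in H0. simpl in H0. rewrite Rminus_0_r in H0.
      replace ((h u - x0) / 1) with (h u - x0) in H0 by field.
      rewrite Rabs_right in H0 by (apply Rle_ge, D_ge0). exact H0. }
  intros s Hs.
  assert (HJ : forall J, D ((h s - x0) / 2 ^ J) < e / 2 ^ J).
  { intros J. pose proof (pow2_pos J) as HpJ.
    assert (Hlt : e / 2 ^ J < /2 ^ J / 2).
    { unfold Rdiv. rewrite (Rmult_comm (/ 2 ^ J)). apply Rmult_lt_compat_r. apply Rinv_0_lt_compat; lra. lra. }
    assert (Hgt : /2 ^ J / 2 < (1 - e) / 2 ^ J).
    { unfold Rdiv. rewrite (Rmult_comm (/ 2 ^ J)). apply Rmult_lt_compat_r. apply Rinv_0_lt_compat; lra. lra. }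
    destruct (dichotomy (h s - x0) e J (Hu s Hs) He4) as [H1|H1]; auto. exfalso.
    set (c := / 2 ^ J / 2).
    set (g := fun u => phi J u - c).
    assert (Hg : continuity g).
    { unfold g. intros u. apply continuity_pt_minus. apply Hphi. apply continuity_pt_const. intros ? ?; reflexivity. }
    assert (Hgs0 : g s0 < 0). { unfold g. rewrite Hphi0. unfold c. pose proof (Rinv_0_lt_compat _ HpJ). lra. }
    assert (Hgs : 0 < g s). { unfold g, phi, c; cbv beta. lra. }
    assert (Hz : exists z, Rabs (z - s0) < rho /\ g z = 0).
    { destruct (Rle_dec s0 s) as [Hle|Hle].
      - destruct (IVT_cor g s0 s Hg Hle) as [z [Hz1 Hz2]]. nra.
        exists z. split; auto. rewrite Rabs_right by lra. rewrite Rabs_right in Hs by lra. lra.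
      - apply Rnot_le_lt in Hle. destruct (IVT_cor g s s0 Hg ltac:(lra)) as [z [Hz1 Hz2]]. nra.
        exists z. split; auto. rewrite Rabs_left1 by lra. rewrite Rabs_left1 in Hs by lra. lra. }
    destruct Hz as [z [Hz1 Hz2]]. unfold g, phi in Hz2; cbv beta in Hz2.
    unfold c in Hz2. destruct (dichotomy (h z - x0) e J (Hu z Hz1) He4); lra. }
  destruct (pow2_large (2 * Rabs (h s - x0) + 1)) as [J HJ2].
  specialize (HJ J). pose proof (pow2_pos J).
  rewrite D_small in HJ.
  - unfold Rdiv in HJ. rewrite Rabs_mult, Rabs_inv, (Rabs_right (2 ^ J)) in HJ by lra.
    apply Rmult_lt_reg_r in HJ. fold x0. pose proof (Rmin_l eps (/4)) as Hme. fold e in Hme. lra.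
    apply Rinv_0_lt_compat; lra.
  - unfold Rdiv. rewrite Rabs_mult, Rabs_inv, (Rabs_right (2 ^ J)) by lra.
    apply Rmult_lt_reg_r with (2 ^ J). lra. rewrite Rmult_assoc, Rinv_l by lra. lra.
Qed.


Definition injR (h : R -> R) := forall x y, h x = h y -> x = y.

Lemma cont_opp : forall h, continuity h -> continuity (fun x => - h x).
Proof. intros h H. pose proof (continuity_opp h H). exact H0. Qed.

Lemma betw_inc : forall h, continuity h -> injR h -> forall a b c, a < b < c -> h a < h c ->
  h a < h b /\ h b < h c.
Proof.
  intros h Hc Hi a b c Hb Hac.
  assert (Hcm : continuity (fun x => h x - h c)).
  { intros x. apply continuity_pt_minus. apply Hc. apply continuity_pt_const. intros ? ?; reflexivity. }
  assert (Ham : continuity (fun x => h x - h a)).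
  { intros x. apply continuity_pt_minus. apply Hc. apply continuity_pt_const. intros ? ?; reflexivity. }
  split.
  - destruct (Rlt_le_dec (h a) (h b)) as [|Hle]; auto. exfalso.
    destruct Hle as [Hlt|Heq]. 2:{ apply Hi in Heq. lra. }
    destruct (IVT_cor _ b c Ham ltac:(lra)) as [z [Hz1 Hz2]]. nra.
    assert (h z = h a) by lra. apply Hi in H. lra.
  - destruct (Rlt_le_dec (h b) (h c)) as [|Hle]; auto. exfalso.
    destruct Hle as [Hlt|Heq]. 2:{ apply Hi in Heq. lra. }
    destruct (IVT_cor _ a b Hcm ltac:(lra)) as [z [Hz1 Hz2]]. nra.
    assert (h z = h c) by lra. apply Hi in H. lra.
Qed.

Lemma betw : forall h, continuity h -> injR h -> forall a b c, a < b < c ->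
  (h a < h b /\ h b < h c) \/ (h c < h b /\ h b < h a).
Proof.
  intros h Hc Hi a b c Hb. destruct (Rlt_le_dec (h a) (h c)) as [Hac|Hca].
  - left. apply betw_inc; auto.
  - destruct Hca as [Hca|Heq]. 2:{ apply Hi in Heq. lra. }
    right. assert (Hi' : injR (fun x => - h x)). { intros x y E. apply Hi. lra. }
    destruct (betw_inc _ (cont_opp h Hc) Hi' a b c Hb ltac:(lra)). lra.
Qed.

Lemma mono_inc : forall h, continuity h -> injR h -> h 0 < h 1 ->
  forall x y, x < y -> h x < h y.
Proof.
  intros h Hc Hi H01 x y Hxy. set (m := Rmin x 0 - 1).
  assert (Hm1 : m < x) by (unfold m; pose proof (Rmin_l x 0); lra).
  assert (Hm2 : m < 0) by (unfold m; pose proof (Rmin_r x 0); lra).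
  assert (HA : h m < h 1). { destruct (betw h Hc Hi m 0 1 ltac:(lra)); lra. }
  assert (HB : h m < h y).
  { destruct (Rtotal_order y 1) as [Hy|[Hy|Hy]].
    - destruct (betw h Hc Hi m y 1 ltac:(lra)); lra.
    - subst; auto.
    - destruct (betw h Hc Hi m 1 y ltac:(lra)); lra. }
  destruct (betw h Hc Hi m x y ltac:(lra)); lra.
Qed.

Lemma mono : forall h, continuity h -> injR h ->
  (forall x y, x < y -> h x < h y) \/ (forall x y, x < y -> h y < h x).
Proof.
  intros h Hc Hi. destruct (Rlt_le_dec (h 0) (h 1)) as [H|H].
  - left. apply mono_inc; auto.
  - destruct H as [H|H]. 2:{ apply Hi in H. lra. }
    right. intros x y Hxy.
    assert (Hi' : injR (fun x => - h x)). { intros u v E. apply Hi. lra. }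
    pose proof (mono_inc _ (cont_opp h Hc) Hi' ltac:(lra) x y Hxy). lra.
Qed.

Lemma cont_of_eps : forall h, (forall s0 eps, 0 < eps -> exists rho, 0 < rho /\
    forall s, Rabs (s - s0) < rho -> Rabs (h s - h s0) < eps) -> continuity h.
Proof. intros h H x. apply cont_pt_eps. intros; apply H; auto. Qed.


Lemma a_1 : a 1 = 1.
Proof. simpl. ring. Qed.

Lemma A_gap : forall Q y, A Q y -> 0 < y -> 1 <= y.
Proof.
  intros Q y [n Hn] Hy. destruct n as [|k].
  - destruct Hn as [->|[j [Hj _]]]. simpl in Hy; lra. discriminate.
  - apply Bk_range in Hn. pose proof (a_le 1 (S k) ltac:(lia)). rewrite a_1 in H. lra.
Qed.

Lemma between_blocks : forall Q n z, A Q z -> a (S n) < z < a (S (S n)) -> Q n.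
Proof.
  intros Q n z [k Hk] Hz. destruct Hk as [->|[j [Hj [Qj Hr]]]].
  - exfalso. destruct (le_lt_dec k (S n)).
    + pose proof (a_le k (S n) l). lra.
    + pose proof (a_le (S (S n)) k ltac:(lia)). lra.
  - destruct (le_lt_dec (S (S n)) k).
    + pose proof (a_le _ _ l). lra.
    + destruct (le_lt_dec k n).
      * pose proof (a_lt k (S n) ltac:(lia)). lra.
      * assert (j = n) by lia. subst; auto.
Qed.

Definition LI (P : nat -> Prop) (x : R) : Prop :=
  A P x /\ exists w, w < x /\ forall y, w < y < x -> ~ A P y.

Lemma LI_a : forall P n, LI P (a n).
Proof.
  intros P n. split. exists n. left; reflexivity.
  exists (a n - /2). split. lra. intros y Hy [k Hk]. apply Bk_range in Hk.
  destruct (le_lt_dec n k).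
  - pose proof (a_le _ _ l). lra.
  - pose proof (a_lt _ _ l). lra.
Qed.

Lemma LI_inv : forall P x, LI P x -> exists n, x = a n.
Proof.
  intros P x [[k Hk] [w [Hw Hy]]]. destruct Hk as [->|[j [Hj [Pj Hr]]]]. eauto.
  destruct (Req_dec x (a k)) as [E|E]. eauto. exfalso.
  set (y := (Rmax w (a k) + x) / 2).
  pose proof (Rmax_l w (a k)). pose proof (Rmax_r w (a k)).
  assert (Rmax w (a k) < x) by (apply Rmax_lub_lt; lra).
  apply (Hy y). unfold y; lra. exists k. right. exists j. repeat split; auto; unfold y; lra.
Qed.


Lemma trans_pp_inc (P Q : nat -> Prop) (h g : R -> R) (Hfg : forall y, h (g y) = y) (Hch : continuous_between (Tp P) (Tp Q) h) : (forall x y, x < y -> h x < h y) -> forall x, Pp P x -> Pp Q (h x).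
Proof.
  intros Hinc x HP M e He. destruct (metric_cont P Q h Hch x e He) as [d [Hd H]].
  destruct (HP (g M) d Hd) as [y [Hy Hdy]]. exists (h y). split; auto.
  destruct Hy as [Hy|Hy]. apply Hinc in Hy. rewrite Hfg in Hy. lra. subst. rewrite Hfg. lra.
Qed.

Lemma trans_pm_inc (P Q : nat -> Prop) (h g : R -> R) (Hfg : forall y, h (g y) = y) (Hch : continuous_between (Tp P) (Tp Q) h) : (forall x y, x < y -> h x < h y) -> forall x, Pm P x -> Pm Q (h x).
Proof.
  intros Hinc x HP M e He. destruct (metric_cont P Q h Hch x e He) as [d [Hd H]].
  destruct (HP (g M) d Hd) as [y [Hy Hdy]]. exists (h y). split; auto.
  destruct Hy as [Hy|Hy]. apply Hinc in Hy. rewrite Hfg in Hy. lra. subst. rewrite Hfg. lra.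
Qed.

Lemma trans_pp_dec (P Q : nat -> Prop) (h g : R -> R) (Hfg : forall y, h (g y) = y) (Hch : continuous_between (Tp P) (Tp Q) h) : (forall x y, x < y -> h y < h x) -> forall x, Pp P x -> Pm Q (h x).
Proof.
  intros Hdec x HP M e He. destruct (metric_cont P Q h Hch x e He) as [d [Hd H]].
  destruct (HP (g M) d Hd) as [y [Hy Hdy]]. exists (h y). split; auto.
  destruct Hy as [Hy|Hy]. apply Hdec in Hy. rewrite Hfg in Hy. lra. subst. rewrite Hfg. lra.
Qed.

Lemma trans_pm_dec (P Q : nat -> Prop) (h g : R -> R) (Hfg : forall y, h (g y) = y) (Hch : continuous_between (Tp P) (Tp Q) h) : (forall x y, x < y -> h y < h x) -> forall x, Pm P x -> Pp Q (h x).
Proof.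
  intros Hdec x HP M e He. destruct (metric_cont P Q h Hch x e He) as [d [Hd H]].
  destruct (HP (g M) d Hd) as [y [Hy Hdy]]. exists (h y). split; auto.
  destruct Hy as [Hy|Hy]. apply Hdec in Hy. rewrite Hfg in Hy. lra. subst. rewrite Hfg. lra.
Qed.

Lemma A_trans (P Q : nat -> Prop) (h g : R -> R) (Hfg : forall y, h (g y) = y) (Hch : continuous_between (Tp P) (Tp Q) h) : (forall x y, x < y -> h x < h y) -> forall x, A P x -> A Q (h x).
Proof.
  intros Hinc x HA. pose proof (A_ge0 P x HA).
  assert (Pp Q (h x)) by (apply (trans_pp_inc P Q h g Hfg Hch); auto; apply Pp_iff; auto).
  assert (Pm Q (h x)) by (apply (trans_pm_inc P Q h g Hfg Hch); auto; apply Pm_iff; auto).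
  apply Pp_iff in H0. apply Pm_iff in H1. destruct H1; auto.
  replace (h x) with 0 by lra. apply A_0.
Qed.


Lemma inc_of_inv : forall h g, (forall y, h (g y) = y) -> (forall x y, x < y -> h x < h y) ->
  forall x y, x < y -> g x < g y.
Proof.
  intros h g Hfg Hinc x y Hxy. destruct (Rlt_le_dec (g x) (g y)) as [|[H|H]]; auto; exfalso.
  - apply Hinc in H. rewrite !Hfg in H. lra.
  - apply (f_equal h) in H. rewrite !Hfg in H. lra.
Qed.

Lemma dec_of_inv : forall h g, (forall y, h (g y) = y) -> (forall x y, x < y -> h y < h x) ->
  forall x y, x < y -> g y < g x.
Proof.
  intros h g Hfg Hdec x y Hxy. destruct (Rlt_le_dec (g y) (g x)) as [|[H|H]]; auto; exfalso.
  - apply Hdec in H. rewrite !Hfg in H. lra.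
  - apply (f_equal h) in H. rewrite !Hfg in H. lra.
Qed.

Lemma LI_trans : forall P Q h g, (forall y, h (g y) = y) -> (forall x, g (h x) = x) ->
  continuous_between (Tp P) (Tp Q) h -> continuous_between (Tp Q) (Tp P) g ->
  (forall x y, x < y -> h x < h y) -> forall x, LI P x -> LI Q (h x).
Proof.
  intros P Q h g Hfg Hgf Hch Hcg Hinc x [HA [w [Hw Hy]]].
  pose proof (inc_of_inv h g Hfg Hinc) as Ginc.
  split. apply (A_trans P Q h g Hfg Hch Hinc x HA).
  exists (h w). split. apply Hinc; auto.
  intros y' [H1 H2] HA'. apply (Hy (g y')).
  - split. apply Ginc in H1. rewrite Hgf in H1. auto. apply Ginc in H2. rewrite Hgf in H2. auto.
  - apply (A_trans Q P g h Hgf Hcg Ginc y' HA').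
Qed.

Lemma h_ge : forall P Q h g, (forall y, h (g y) = y) -> (forall x, g (h x) = x) ->
  continuous_between (Tp P) (Tp Q) h -> continuous_between (Tp Q) (Tp P) g ->
  (forall x y, x < y -> h x < h y) -> forall n, a n <= h (a n).
Proof.
  intros P Q h g Hfg Hgf Hch Hcg Hinc n.
  assert (Hl : forall n, exists m, h (a n) = a m).
  { intros k. apply (LI_inv Q). apply (LI_trans P Q h g); auto. apply LI_a. }
  induction n.
  - destruct (Hl 0%nat) as [m Hm]. rewrite Hm. apply a_ge0.
  - destruct (Hl (S n)) as [m Hm]. rewrite Hm.
    assert (h (a n) < h (a (S n))) by (apply Hinc; pose proof (a_step n); lra).
    rewrite Hm in H. destruct (le_lt_dec m n).
    + pose proof (a_le _ _ l). lra.
    + apply a_le. lia.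
Qed.

Lemma h_fix : forall P Q h g, (forall y, h (g y) = y) -> (forall x, g (h x) = x) ->
  continuous_between (Tp P) (Tp Q) h -> continuous_between (Tp Q) (Tp P) g ->
  (forall x y, x < y -> h x < h y) -> forall n, h (a n) = a n.
Proof.
  intros P Q h g Hfg Hgf Hch Hcg Hinc n.
  pose proof (inc_of_inv h g Hfg Hinc) as Ginc.
  pose proof (h_ge P Q h g Hfg Hgf Hch Hcg Hinc n).
  pose proof (h_ge Q P g h Hgf Hfg Hcg Hch Ginc n).
  assert (h (a n) <= h (g (a n))).
  { destruct H0 as [H0|H0]. left; apply Hinc; auto. rewrite <- H0. lra. }
  rewrite Hfg in H1. lra.
Qed.

Lemma main_dir : forall P Q, homeomorphic (Tp P) (Tp Q) -> forall n, P n -> Q n.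
Proof.
  intros P Q [h [g [Hgf [Hfg [Hch Hcg]]]]] n Pn.
  assert (Hhc : continuity h) by (apply cont_of_eps; apply (eta_cont P Q h Hch)).
  assert (Hhi : injR h). { intros x y E. rewrite <- (Hgf x), <- (Hgf y), E. reflexivity. }
  destruct (mono h Hhc Hhi) as [Hinc|Hdec].
  - set (y := a (S n) + /4).
    assert (HA : A P y). { exists (S n). right. exists n. unfold y. repeat split; auto; lra. }
    pose proof (A_trans P Q h g Hfg Hch Hinc y HA).
    apply (between_blocks Q n (h y) H).
    rewrite <- (h_fix P Q h g Hfg Hgf Hch Hcg Hinc (S n)).
    rewrite <- (h_fix P Q h g Hfg Hgf Hch Hcg Hinc (S (S n))).
    pose proof (a_step (S n)). split; apply Hinc; unfold y; lra.
  - exfalso. pose proof (dec_of_inv h g Hfg Hdec) as Gdec.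
    assert (H0 : 0 <= h 0).
    { apply (Pp_iff Q). apply (trans_pm_dec P Q h g Hfg Hch Hdec). apply Pm_iff. left; lra. }
    assert (H1 : 0 <= h 1).
    { apply (Pp_iff Q). apply (trans_pm_dec P Q h g Hfg Hch Hdec). apply Pm_iff. right.
      exists 1%nat. left. rewrite a_1. reflexivity. }
    assert (H10 : h 1 < h 0) by (apply Hdec; lra).
    set (y := Rmin (h 0) (/4) / 2).
    assert (Hy : 0 < y < h 0 /\ y < /2).
    { unfold y. pose proof (Rmin_l (h 0) (/4)). pose proof (Rmin_r (h 0) (/4)).
      assert (0 < Rmin (h 0) (/4)) by (apply Rmin_pos; lra). lra. }
    assert (Hgy : 0 < g y). { rewrite <- (Hgf 0). apply Gdec. lra. }
    assert (Pm Q (h (g y))). { apply (trans_pp_dec P Q h g Hfg Hch Hdec). apply Pp_iff. lra. }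
    rewrite Hfg in H. apply Pm_iff in H. destruct H as [H|H]. lra.
    pose proof (A_gap Q y H). lra.
Qed.


Definition q (n : nat) : R := let (i, j) := Cantor.of_nat n in INR i / 2 ^ j - 2 ^ j.

Lemma q_dense : forall r s, r < s -> exists n, r <= q n < s.
Proof.
  intros r s Hrs. destruct (choose_m (s - r) (Rabs r + 1) ltac:(lra)) as [j [Hj1 Hj2]].
  pose proof (pow2_pos j) as Hp. pose proof (Rle_abs (-r)). rewrite Rabs_Ropp in H.
  set (w := (r + 2 ^ j) * 2 ^ j).
  assert (Hw : 0 < w) by (unfold w; apply Rmult_lt_0_compat; lra).
  destruct (archimed w) as [A1 A2].
  assert (Hup : (0 <= up w)%Z) by (apply le_IZR; lra).
  exists (Cantor.to_nat (Z.to_nat (up w), j)). unfold q. rewrite Cantor.cancel_of_to.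
  rewrite INR_IZR_INZ, Z2Nat.id by exact Hup.
  assert (E : IZR (up w) / 2 ^ j - 2 ^ j - r = (IZR (up w) - w) / 2 ^ j).
  { unfold w. field. lra. }
  assert (0 < (IZR (up w) - w) / 2 ^ j).
  { unfold Rdiv. apply Rmult_lt_0_compat. lra. apply Rinv_0_lt_compat; lra. }
  assert ((IZR (up w) - w) / 2 ^ j <= (/2) ^ j).
  { rewrite pow_inv. unfold Rdiv. rewrite <- (Rmult_1_l (/ 2 ^ j)) at 2.
    apply Rmult_le_compat_r. left; apply Rinv_0_lt_compat; lra. lra. }
  lra.
Qed.

Definition Pr (r : R) (n : nat) : Prop := q n < r.

Lemma homeo_sym : forall t s, homeomorphic t s -> homeomorphic s t.
Proof. intros t s [h [g [H1 [H2 [H3 H4]]]]]. exists g, h. auto. Qed.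

Theorem theorem6 :
  exists T : R -> topology_on_R,
    (forall r, in_L (T r) /\ metrizable (T r) /\ first_category (T r)) /\
    (forall r s, r <> s -> ~ homeomorphic (T r) (T s)).
Proof.
  exists (fun r => Tp (Pr r)). split.
  - intros r. split. split. apply Tp_topology. split. apply Tp_haus. apply Tp_coarser.
    split. apply Tp_metrizable. apply Tp_first_category.
  - intros r s Hrs Hh. destruct (Rtotal_order r s) as [H|[H|H]].
    + destruct (q_dense r s H) as [n Hn].
      pose proof (main_dir (Pr s) (Pr r) (homeo_sym _ _ Hh) n). unfold Pr in H0. lra.
    + contradiction.
    + destruct (q_dense s r H) as [n Hn].
      pose proof (main_dir (Pr r) (Pr s) Hh n). unfold Pr in H0. lra.
Qed.
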